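(* Let $\mathcal{C}$ be an $[n,k,d]_q$ linear code with two $(r_i,\delta_i)_{i\in\{1,2\}}$ localities with respect to the sets $\mathcal{T}_1$, $\mathcal{T}_2=[n]\setminus\mathcal{T}_1$, where $n_i=|\mathcal{T}_i|$, $r_1\le r_2$ and $\delta_1\ge\delta_2\ge2$. Put $\Delta=\lceil n_1/(r_1+\delta_1-1)\rceil(\delta_1-1)$. If $r_1\lceil n_1/(r_1+\delta_1-1)\rceil\le k-1$ and $r_1\lceil(\Delta-1)/(\delta_1-1)\rceil+(\Delta-1)<n_1$, then $$d\le n-k+1-\left\lceil\frac{n_1}{r_1+\delta_1-1}\right\rceil(\delta_1-1)-\left(\left\lceil\frac{k-r_1\lceil n_1/(r_1+\delta_1-1)\rceil}{r_2}\right\rceil-1\right)(\delta_2-1).$$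
   Context: $[n]=\{1,\dots,n\}$. For an $[n,k,d]_q$ linear code with generator matrix columns $\vec g_1,\dots,\vec g_n$, a regenerating set of coordinate $i$ is a (minimal) subset $R\subseteq[n]$ with $i\in R$ such that $\vec g_i$ is an $\mathbb{F}_q$-linear combination of $\{\vec g_j\}_{j\in R\setminus\{i\}}$ and no proper subset of $R\setminus\{i\}$ suffices; $\mathcal{R}_i$ is the set of all regenerating sets of coordinate $i$. The code has two $(r_i,\delta_i)_{i\in\{1,2\}}$ localities if $\mathcal{T}_1\subseteq[n]$, $\mathcal{T}_2=[n]\setminus\mathcal{T}_1$, $r_1\le r_2$, $\delta_1\ge\delta_2\ge2$ are integers, and for $i=1,2$ and each $\iota\in\mathcal{T}_i$ there is $S_\iota\subseteq\mathcal{T}_i$ with $\iota\in S_\iota$, $\delta_i\le|S_\iota|\le r_i+\delta_i-1$, such that for every $E\subseteq S_\iota$ with $|E|=\delta_i-1$ and every $j\in E$, $(S_\iota\setminus E)\cup\{j\}\in\mathcal{R}_j$. *)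

(* Defs.v *)
From HB Require Import structures.
From mathcomp Require Import all_boot all_order all_algebra all_field.
Set Implicit Arguments. Unset Strict Implicit. Unset Printing Implicit Defensive.
Import GRing.Theory Num.Theory.
Local Open Scope ring_scope.

(* A linear [n,k,d]_q code over the finite field F (q = #|F|) is given by a
   generator matrix G : 'M[F]_(k, n) of rank k; its columns are g_1..g_n
   (col i G), and its codewords are the u *m G, u : 'rV_k. *)

Definition wt (F : fieldType) (n : nat) (c : 'rV[F]_n) : nat :=
  #|[set j : 'I_n | c 0 j != 0]|.

Definition is_min_dist (F : fieldType) (k n : nat) (G : 'M[F]_(k, n)) (d : nat) : Prop :=
  (exists2 u : 'rV[F]_k, u != 0 & wt (u *m G) = d) /\
  (forall u : 'rV[F]_k, u != 0 -> (d <= wt (u *m G))%N).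

Definition lin_comb (F : fieldType) (k n : nat) (G : 'M[F]_(k, n))
    (i : 'I_n) (A : {set 'I_n}) : Prop :=
  exists c : 'I_n -> F, col i G = \sum_(j in A) c j *: col j G.

Definition regenerating (F : fieldType) (k n : nat) (G : 'M[F]_(k, n))
    (i : 'I_n) (R : {set 'I_n}) : Prop :=
  [/\ i \in R, lin_comb G i (R :\ i) &
      forall B : {set 'I_n}, B \proper (R :\ i) -> ~ lin_comb G i B].

Definition locality (F : fieldType) (k n : nat) (G : 'M[F]_(k, n))
    (T : {set 'I_n}) (r delta : nat) : Prop :=
  forall iota, iota \in T -> exists S : {set 'I_n},
    [/\ S \subset T, iota \in S, (delta <= #|S| <= r + delta - 1)%N &
      forall E : {set 'I_n}, E \subset S -> #|E| = (delta - 1)%N ->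
        forall j, j \in E -> regenerating G j ((S :\: E) :|: [set j])].

Definition two_localities (F : fieldType) (k n : nat) (G : 'M[F]_(k, n))
    (T1 : {set 'I_n}) (r1 r2 d1 d2 : nat) : Prop :=
  [/\ (r1 <= r2)%N, (d2 <= d1)%N, (2 <= d2)%N,
      locality G T1 r1 d1 & locality G (~: T1) r2 d2].

(* Ceiling of a / b for b > 0 (integers). *)
Definition ceilz (a b : int) : int := - ((- a) %/ b)%Z.

(* Main.v *)
Require Import Defs.
From HB Require Import structures.
From mathcomp Require Import all_boot all_order all_algebra all_field.
From mathcomp Require Import zify.
Import GRing.Theory Num.Theory.
Local Open Scope ring_scope.
Set Implicit Arguments. Unset Strict Implicit. Unset Printing Implicit Defensive.

Definition vv (F : fieldType) k n (G : 'M[F]_(k, n)) (j : 'I_n) : 'rV[F]_k := row j G^T.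
Definition Sp (F : fieldType) k n (G : 'M[F]_(k, n)) (Y : {set 'I_n}) : 'M[F]_k :=
  (\sum_(j in Y) <<vv G j>>)%MS.
Definition rk (F : fieldType) k n (G : 'M[F]_(k, n)) (Y : {set 'I_n}) : nat := \rank (Sp G Y).

Lemma sub_Sp (F : fieldType) k n (G : 'M[F]_(k, n)) (Y : {set 'I_n}) j :
  j \in Y -> (vv G j <= Sp G Y)%MS.
Proof. by move=> jY; apply: (sumsmx_sup j) => //; rewrite genmxE. Qed.

Lemma Sp_subP (F : fieldType) k m n (G : 'M[F]_(k, n)) (Y : {set 'I_n}) (B : 'M_(m, k)) :
  (forall j, j \in Y -> (vv G j <= B)%MS) -> (Sp G Y <= B)%MS.
Proof. by move=> H; apply/sumsmx_subP => j jY; rewrite genmxE; apply: H. Qed.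

Lemma SpS (F : fieldType) k n (G : 'M[F]_(k, n)) (Y Z : {set 'I_n}) :
  Y \subset Z -> (Sp G Y <= Sp G Z)%MS.
Proof. by move=> /subsetP sYZ; apply: Sp_subP => j /sYZ; apply: sub_Sp. Qed.

Lemma rkS (F : fieldType) k n (G : 'M[F]_(k, n)) (Y Z : {set 'I_n}) :
  Y \subset Z -> (rk G Y <= rk G Z)%N.
Proof. by move=> /(SpS G) /mxrankS. Qed.

Lemma rk_card (F : fieldType) k n (G : 'M[F]_(k, n)) (Y : {set 'I_n}) : (rk G Y <= #|Y|)%N.
Proof.
rewrite /rk /Sp -sum1_card.
apply: (big_ind2 (fun (A : 'M[F]_k) m => \rank A <= m)%N).
- by rewrite mxrank0.
- move=> A1 m1 A2 m2 h1 h2; apply: leq_trans (mxrank_adds_leqif A1 A2).1 _.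
  exact: leq_add.
- by move=> j _; rewrite genmxE rank_leq_row.
Qed.

Lemma rkU (F : fieldType) k n (G : 'M[F]_(k, n)) (Y Z : {set 'I_n}) :
  (rk G (Y :|: Z) <= rk G Y + rk G Z)%N.
Proof.
apply: leq_trans (mxrank_adds_leqif (Sp G Y) (Sp G Z)).1.
apply: mxrankS; apply: Sp_subP => j; rewrite inE => /orP [] jY.
  by apply: submx_trans (addsmxSl _ _); apply: sub_Sp.
by apply: submx_trans (addsmxSr _ _); apply: sub_Sp.
Qed.

Lemma lin_comb_Sp (F : fieldType) k n (G : 'M[F]_(k, n)) i (A : {set 'I_n}) :
  lin_comb G i A -> (vv G i <= Sp G A)%MS.
Proof.
move=> [c Hc]; rewrite /vv -tr_col Hc.
have -> : (\sum_(j in A) c j *: col j G)^T = \sum_(j in A) c j *: vv G j.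
  apply/matrixP => a b; rewrite !mxE !summxE; apply: eq_bigr => j _.
  by rewrite !mxE.
by apply: summx_sub => j jA; apply: scalemx_sub; apply: sub_Sp.
Qed.

Lemma exists_out (F : fieldType) k n (G : 'M[F]_(k, n)) (Y : {set 'I_n}) :
  \rank G = k -> (rk G Y < k)%N -> exists i, ~~ (vv G i <= Sp G Y)%MS.
Proof.
move=> rG lt.
case: (pickP [pred i | ~~ (vv G i <= Sp G Y)%MS]) => [i Hi|H]; first by exists i.
suff : (G^T <= Sp G Y)%MS.
  by move=> /mxrankS; rewrite mxrank_tr rG /rk leqNgt lt.
apply/row_subP => i; have := H i; rewrite /= => /negbFE; done.
Qed.

Lemma codeword (F : fieldType) k n (G : 'M[F]_(k, n)) (Y : {set 'I_n}) :
  (rk G Y < k)%N -> exists2 u : 'rV[F]_k, u != 0 & (wt (u *m G) <= n - #|Y|)%N.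
Proof.
move=> lt; set B := Sp G Y.
set K := kermx B^T.
have rK : (0 < \rank K)%N by rewrite mxrank_ker mxrank_tr subn_gt0.
have [r Hr] : exists r, row r K != 0.
  case: (pickP [pred r | row r K != 0]) => [r Hr|H]; first by exists r.
  suff K0 : K = 0 by move: rK; rewrite K0 mxrank0.
  apply/row_matrixP => r; rewrite row0; have := H r; rewrite /= => /negbFE/eqP; done.
exists (row r K) => //.
have uB : row r K *m B^T = 0 by rewrite -row_mul mulmx_ker row0.
apply: (@leq_trans #|~: Y|); last by have := cardsC Y; rewrite card_ord; lia.
apply: subset_leq_card; apply/subsetP => j; rewrite !inE; apply: contraNN => jY.
have /submxP [w Hw] := sub_Sp G jY.
have : (row r K *m (vv G j)^T) = 0.
  by rewrite Hw trmx_mul mulmxA uB mul0mx.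
rewrite /vv tr_row trmxK => /matrixP /(_ 0 0); rewrite !mxE => H0.
have E : \sum_j0 row r K 0 j0 * col j G j0 0 = \sum_j0 row r K 0 j0 * G j0 j.
  by apply: eq_bigr => l _; rewrite !mxE.
by rewrite -E H0.
Qed.

Lemma mid_set (T : finType) (A B : {set T}) m :
  A \subset B -> (#|A| <= m <= #|B|)%N ->
  exists E : {set T}, [/\ A \subset E, E \subset B & #|E| = m].
Proof.
move=> sAB; elim: m => [|m IH].
  rewrite leqn0 => /andP [/eqP /cards0_eq A0 _]; exists A; split => //.
  by rewrite A0 cards0.
move=> /andP [h1 h2].
case: (ltngtP #|A| m.+1) h1 => // [lt|eq] _; last first.
  by exists A; split.
have [E [sAE sEB cE]] : exists E : {set T}, [/\ A \subset E, E \subset B & #|E| = m].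
  by apply: IH; apply/andP; split; lia.
have : (0 < #|B :\: E|)%N.
  by rewrite cardsD (setIidPr sEB) cE; lia.
move=> /card_gt0P [x]; rewrite inE => /andP [xE xB].
exists (x |: E); split.
- by apply: subset_trans sAE (subsetUr _ _).
- by apply/subsetP => y; rewrite !inE => /orP [/eqP ->|/(subsetP sEB)].
- by rewrite cardsU1 xE cE.
Qed.

Lemma step (F : fieldType) k n (G : 'M[F]_(k, n)) (Y S : {set 'I_n}) r delta i :
  (delta <= #|S| <= r + delta - 1)%N ->
  (forall E : {set 'I_n}, E \subset S -> #|E| = (delta - 1)%N ->
        forall j, j \in E -> regenerating G j ((S :\: E) :|: [set j])) ->
  i \in S -> ~~ (vv G i <= Sp G Y)%MS ->
  (rk G (Y :|: S) + (delta - 1) + #|Y| <= rk G Y + #|Y :|: S|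
   /\ rk G (Y :|: S) <= rk G Y + r)%N.
Proof.
move=> /andP [hd hr] Hreg iS niY.
have key : forall E : {set 'I_n}, E \subset S -> #|E| = (delta - 1)%N ->
    forall j, j \in E -> (vv G j <= Sp G (S :\: E))%MS.
  move=> E sES cE j jE; have [_ lc _] := Hreg E sES cE j jE.
  apply: submx_trans (lin_comb_Sp lc) _; apply: SpS.
  apply/subsetP => x; rewrite !inE => /andP [xj /orP [//|/eqP xj']].
  by rewrite xj' eqxx in xj.
have cU : #|Y :|: S| = (#|Y| + #|S :\: Y|)%N.
  rewrite cardsU cardsD setIC; have := subset_leq_card (subsetIl S Y); lia.
suff H1 : (rk G (Y :|: S) + (delta - 1) + #|Y| <= rk G Y + #|Y :|: S|)%N.
  split => //; move: H1; rewrite cU.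
  have : (#|S :\: Y| <= #|S|)%N by apply: subset_leq_card; apply: subsetDl.
  lia.
case: (leqP (delta - 1) #|S :\: Y|) => hc.
- have [E [_ sE cE]] : exists E : {set 'I_n},
      [/\ set0 \subset E, E \subset S :\: Y & #|E| = (delta - 1)%N].
    by apply: mid_set; rewrite ?sub0set ?cards0.
  have sES : E \subset S by apply: subset_trans sE (subsetDl _ _).
  have h1 : (rk G (Y :|: S) <= rk G (Y :|: ((S :\: E) :\: Y)))%N.
    apply: mxrankS; apply: Sp_subP => j; rewrite inE => /orP [jY|jS].
      by apply: sub_Sp; rewrite inE jY.
    case: (boolP (j \in E)) => jE.
      apply: submx_trans (key E sES cE j jE) _; apply: SpS.
      apply/subsetP => x; rewrite !inE; case: (x \in Y) => //=.
    by apply: sub_Sp; rewrite !inE jE jS; case: (j \in Y).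
  have h2 := rkU G Y ((S :\: E) :\: Y).
  have h3 := rk_card G ((S :\: E) :\: Y).
  have h4 : #|(S :\: E) :\: Y| = (#|S :\: Y| - #|E|)%N.
    rewrite setDDl setUC -setDDl cardsD (setIidPr sE) //.
  rewrite cU; lia.
- exfalso; move: niY; apply/negP/negPn.
  have [E [sE sES cE]] : exists E : {set 'I_n},
      [/\ S :\: Y \subset E, E \subset S & #|E| = (delta - 1)%N].
    by apply: mid_set; [apply: subsetDl | apply/andP; split; lia].
  have sY : S :\: E \subset Y.
    apply/subsetP => x; rewrite inE => /andP [xE xS].
    apply/negPn/negP => xY; move: xE; apply/negP/negPn.
    by apply: (subsetP sE); rewrite inE xY.
  case: (boolP (i \in E)) => iE.
    by apply: submx_trans (key E sES cE i iE) (SpS G sY).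
  by apply: sub_Sp; apply: (subsetP sY); rewrite inE iE.
Qed.

Lemma extend (F : fieldType) k n (G : 'M[F]_(k, n)) : \rank G = k ->
  forall m (Y : {set 'I_n}), (k - 1 - rk G Y)%N = m -> (rk G Y <= k - 1)%N ->
  exists Y' : {set 'I_n}, rk G Y' = (k - 1)%N /\ (#|Y| + (k - 1) <= #|Y'| + rk G Y)%N.
Proof.
move=> rG; elim=> [|m IH] Y hm hle.
  by exists Y; split; lia.
have lt0 : (rk G Y < k)%N by lia.
have [i ni] := exists_out rG lt0.
have iY : i \notin Y by apply: contra ni; apply: sub_Sp.
have sY : Y \subset i |: Y by apply: subsetUr.
have [_ Heq] := mxrank_leqif_sup (SpS G sY).
have lt : (rk G Y < rk G (i |: Y))%N.
  rewrite ltn_neqAle (rkS G sY) andbT /rk Heq; apply: contra ni => h.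
  by apply: submx_trans h; apply: sub_Sp; rewrite !inE eqxx.
have le : (rk G (i |: Y) <= rk G Y + 1)%N.
  apply: leq_trans (rkU G [set i] Y) _; rewrite addnC leq_add2l.
  by apply: leq_trans (rk_card _ _) _; rewrite cards1.
have e1 : (k - 1 - rk G (i |: Y))%N = m by lia.
have e2 : (rk G (i |: Y) <= k - 1)%N by lia.
have [Y' [h1 h2]] := IH (i |: Y) e1 e2.
exists Y'; split => //; move: h2; rewrite cardsU1 iY; lia.
Qed.

Lemma phase1 (F : fieldType) k n (G : 'M[F]_(k, n)) (T1 : {set 'I_n}) r1 d1 cn :
  locality G T1 r1 d1 -> forall t, (t <= cn)%N ->
  exists Y : {set 'I_n}, Y \subset T1 /\
   ((rk G Y <= t * r1 /\ rk G Y + t * (d1 - 1) <= #|Y|) \/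
    (rk G Y <= (cn - 1) * r1 /\ forall j, j \in T1 -> (vv G j <= Sp G Y)%MS))%N.
Proof.
move=> L; elim=> [|t IH] ht.
  exists set0; split; first exact: sub0set.
  left; have := rk_card G set0; rewrite cards0; lia.
have [Y [sY [[h1 h2]|h]]] := IH (ltnW ht); last by exists Y; split => //; right.
case: (pickP [pred j | (j \in T1) && ~~ (vv G j <= Sp G Y)%MS]) => [i /andP [iT ni]|H].
  have [S [sS iS hS Hreg]] := L i iT.
  have [s1 s2] := step hS Hreg iS ni.
  exists (Y :|: S); split; first by rewrite subUset sY.
  left; have := leq_card_setU Y S; lia.
exists Y; split => //; right; split; first by nia.
by move=> j jT; have := H j; rewrite /= jT /= => /negbFE.
Qed.

Lemma phase2 (F : fieldType) k n (G : 'M[F]_(k, n)) (T1 : {set 'I_n}) r1 r2 d1 d2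
   (Y0 : {set 'I_n}) a g :
  \rank G = k -> two_localities G T1 r1 r2 d1 d2 ->
  (rk G Y0 <= a)%N -> (rk G Y0 + g <= #|Y0|)%N ->
  forall m, (a + m * r2 < k)%N ->
  exists Y : {set 'I_n}, (rk G Y <= a + m * r2 /\ rk G Y + g + m * (d2 - 1) <= #|Y|)%N.
Proof.
move=> rG [h12 hd hd2 L1 L2] b1 b2; elim=> [|m IH] hm.
  by exists Y0; split; lia.
have hm' : (a + m * r2 < k)%N by nia.
have [Y [y1 y2]] := IH hm'.
have lt0 : (rk G Y < k)%N by nia.
have [i ni] := exists_out rG lt0.
case: (boolP (i \in T1)) => iT.
  have [S [sS iS hS Hreg]] := L1 i iT.
  have [s1 s2] := step hS Hreg iS ni.
  exists (Y :|: S); have := leq_card_setU Y S; nia.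
have iT' : i \in ~: T1 by rewrite inE.
have [S [sS iS hS Hreg]] := L2 i iT'.
have [s1 s2] := step hS Hreg iS ni.
exists (Y :|: S); have := leq_card_setU Y S; nia.
Qed.

Lemma ceilz_ge (a b : int) : 0 < b -> a <= ceilz a b * b.
Proof.
move=> hb; rewrite /ceilz.
have e := divz_eq (- a) b; have r0 := modz_ge0 (- a) (_ : b != 0).
have r1 := ltz_pmod (- a) hb.
move: e r0 r1; set q := ((- a) %/ b)%Z; set r := ((- a) %% b)%Z.
have bn : b != 0 by lia.
move=> e r0 r1; have := r0 bn; nia.
Qed.

Lemma ceilz_lt (a b : int) : 0 < b -> (ceilz a b - 1) * b < a.
Proof.
move=> hb; rewrite /ceilz.
have e := divz_eq (- a) b; have r0 := modz_ge0 (- a) (_ : b != 0).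
have r1 := ltz_pmod (- a) hb.
move: e r0 r1; set q := ((- a) %/ b)%Z; set r := ((- a) %% b)%Z.
have bn : b != 0 by lia.
move=> e r0 r1; have := r0 bn; nia.
Qed.
Unset Implicit Arguments.

Theorem theorem1 (F : finFieldType) (n k d : nat) (G : 'M[F]_(k, n))
    (T1 : {set 'I_n}) (r1 r2 d1 d2 : nat) :
  \rank G = k ->
  is_min_dist G d ->
  two_localities G T1 r1 r2 d1 d2 ->
  let n1 : int := #|T1|%:Z in
  let c : int := ceilz n1 (r1%:Z + d1%:Z - 1) in
  let Delta : int := c * (d1%:Z - 1) in
  r1%:Z * c <= k%:Z - 1 ->
  r1%:Z * ceilz (Delta - 1) (d1%:Z - 1) + (Delta - 1) < n1 ->
  d%:Z <= n%:Z - k%:Z + 1 - c * (d1%:Z - 1)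
          - (ceilz (k%:Z - r1%:Z * c) r2%:Z - 1) * (d2%:Z - 1).
Proof.
move=> rG [_ Hmd] TL n1 c Delta Hc Hcond.
have TL' := TL; case: TL' => h12 hd hd2 L1 L2.
have hc1 : n1 <= c * (r1%:Z + d1%:Z - 1) by apply: ceilz_ge; lia.
have hC : Delta - 1 <= ceilz (Delta - 1) (d1%:Z - 1) * (d1%:Z - 1).
  by apply: ceilz_ge; lia.
have hm : (0 < r2)%N -> (ceilz (k%:Z - r1%:Z * c) r2%:Z - 1) * r2%:Z < k%:Z - r1%:Z * c.
  by move=> h; apply: ceilz_lt; lia.
have hm0 : r2 = 0%N -> ceilz (k%:Z - r1%:Z * c) r2%:Z = 0.
  by move=> ->; rewrite /ceilz divz0.
have eD : Delta = c * (d1%:Z - 1) by [].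
have en1 : n1 = #|T1|%:Z by [].
move: hc1 hC hm hm0 eD en1 Hc Hcond.
set C' := ceilz (Delta - 1) (d1%:Z - 1).
set ms := ceilz (k%:Z - r1%:Z * c) r2%:Z.
clearbody C' ms Delta n1 c => hc1 hC hm hm0 eD en1 Hc Hcond.
have [cn ec] : exists cn : nat, c = cn%:Z.
  exists `|c|%N; nia.
subst c.
have [Y0 [r0 g0]] : exists Y0 : {set 'I_n},
    (rk G Y0 <= cn * r1 /\ rk G Y0 + cn * (d1 - 1) <= #|Y0|)%N.
  have [Y [sY [[h1 h2]|[h1 h2]]]] := phase1 L1 (leqnn cn); first by exists Y.
  exists T1.
  have : (rk G T1 <= rk G Y)%N by apply: mxrankS; apply: Sp_subP.
  have : C' >= cn%:Z - 1 by nia.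
  move=> hC'; split; nia.
have [M [hM1 hM2]] : exists M : nat, (cn * r1 + M * r2 < k)%N /\ ms - 1 <= M%:Z.
  case: (posnP r2) => h2.
    by exists 0%N; rewrite hm0 //; split; lia.
  have := hm h2; case: (boolP (ms - 1 < 0)) => hms.
    by exists 0%N; split; nia.
  by exists `|ms - 1|%N; split; nia.
have [Y [y1 y2]] := phase2 rG TL r0 g0 hM1.
have hY : (rk G Y <= k - 1)%N by lia.
have [Y' [e1 e2]] := extend rG (erefl _) hY.
have lt' : (rk G Y' < k)%N by lia.
have [u u0 wu] := codeword lt'.
have := Hmd u u0.
have := cardsC Y'; rewrite card_ord.
have : (ms - 1) * (d2%:Z - 1) <= M%:Z * (d2%:Z - 1) by nia.
nia.
Qed.
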